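(* Let $\mathbb{F}$ be a finite field, let $\ell,h,n,d$ be positive integers, and let $P\subseteq\mathbb{F}[w_1,\dots,w_\ell]$ be a maximal ideal such that $\mathbb{E}=\mathbb{F}[w_1,\dots,w_\ell]/P$ is a finite field extension of $\mathbb{F}$ of degree $k$, and such that every coset $g+P\in\mathbb{E}$ contains an element of $\mathbb{F}[w_1,\dots,w_\ell]$ of total degree at most $h$. Let $\{g_1+P,\dots,g_k+P\}$ be a basis of $\mathbb{E}$ over $\mathbb{F}$, for each $i$ let $g_i'\in g_i+P$ have total degree at most $h$, and let $\varphi:\mathbb{E}\to\mathbb{F}^{\le h}[w_1,\dots,w_\ell]$ be the $\mathbb{F}$-linear map with $\varphi(g_i+P)=g_i'$ for all $i$ (applied coordinate-wise to vectors). Let $\widehat H:S\to\mathbb{E}^n$ be a hitting set generator with density $1-\delta$ for $n$-variate polynomials of degree at most $d$ over $\mathbb{E}$. Then $H=\varphi\circ\widehat H:S\to(\mathbb{F}^{\le h}[w_1,\dots,w_\ell])^n$ is a polynomial hitting set generator with density $1-\delta$ for $n$-variate polynomials of degree at most $d$ over $\mathbb{F}$ with $\ell$-variate polynomial evaluation points of degree at most $h$.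
   Context: $\mathbb{F}^{\le h}[w_1,\dots,w_\ell]$ denotes the polynomials in $w_1,\dots,w_\ell$ over $\mathbb{F}$ of total degree at most $h$. A hitting set generator (HSG) with density $1-\delta$ for $n$-variate polynomials of degree at most $d$ over a field $\mathbb{E}$ is a map $H:T\to\mathbb{E}^n$ from a finite nonempty set $T$ such that for every nonzero $f\in\mathbb{E}[x_1,\dots,x_n]$ of total degree at most $d$, $\Pr_{t\in T}[f(H(t))\neq 0]\ge 1-\delta$ ($t$ uniform). A polynomial hitting set generator (PHSG) with density $1-\delta$ for $n$-variate polynomials of degree at most $d$ over $\mathbb{F}$ with $\ell$-variate polynomial evaluation points of degree at most $h$ is a map $H:T\to(\mathbb{F}^{\le h}[w_1,\dots,w_\ell])^n$ from a finite nonempty set $T$ such that for every nonzero $f\in\mathbb{F}[x_1,\dots,x_n]$ of total degree at most $d$, $\Pr_{y\in T}[f(H(y))=0]\le\delta$, where $f(H(y))\in\mathbb{F}[w_1,\dots,w_\ell]$ is the composed polynomial and $y$ is uniform in $T$. Its seed length is $\log|T|$. *)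

(* Defs.v *)
From HB Require Import structures.
From mathcomp Require Import all_boot all_order all_algebra all_field.
From mathcomp Require Import mpoly.
Set Implicit Arguments. Unset Strict Implicit. Unset Printing Implicit Defensive.
Import GRing.Theory Num.Theory.
Local Open Scope ring_scope.

(* total degree at most d  <->  msize p <= d.+1  (msize = 1 + degree, msize 0 = 0) *)
Definition deg_le (m : nat) (K : ringType) (d : nat) (p : {mpoly K[m]}) : bool :=
  (msize p <= d.+1)%N.

Definition is_HSG (R : realFieldType) (E : fieldType) (n d : nat) (delta : R)
    (S : finType) (H : S -> n.-tuple E) : Prop :=
  (0 < #|S|)%N /\
  forall f : {mpoly E[n]}, f != 0 -> deg_le d f ->
    1 - delta <= (#|[set t : S | meval (tnth (H t)) f != 0]|%:R / #|S|%:R).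

Definition is_PHSG (R : realFieldType) (F : fieldType) (n d l h : nat) (delta : R)
    (T : finType) (H : T -> n.-tuple {mpoly F[l]}) : Prop :=
  [/\ (0 < #|T|)%N,
      (forall y i, deg_le h (tnth (H y) i)) &
      forall f : {mpoly F[n]}, f != 0 -> deg_le d f ->
        (#|[set y : T | f \mPo (H y) == 0]|%:R / #|T|%:R) <= delta].

(* Main.v *)
Require Import Defs.
From HB Require Import structures.
From mathcomp Require Import all_boot all_order all_algebra all_field.
From mathcomp Require Import mpoly.
Import Order.TTheory GRing.Theory Num.Theory.
Local Open Scope ring_scope.

Theorem claim4p1
  (F : finFieldType) (l h n d k : nat)
  (hl : (0 < l)%N) (hh : (0 < h)%N) (hn : (0 < n)%N) (hd : (0 < d)%N)
  (E : fieldExtType F)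
  (* E = F[w_1..w_l]/P : pi is the quotient map, P = ker pi (maximal, E a field) *)
  (pi : {lrmorphism {mpoly F[l]} -> E})
  (pi_surj : forall e : E, exists p : {mpoly F[l]}, pi p = e)
  (hk : \dim (fullv : {vspace E}) = k)
  (hcoset : forall e : E, exists p : {mpoly F[l]}, deg_le h p /\ pi p = e)
  (g g' : 'I_k -> {mpoly F[l]})
  (hbasis : basis_of fullv [seq pi (g i) | i <- enum 'I_k])
  (hg'deg : forall i, deg_le h (g' i))
  (hg'coset : forall i, pi (g' i) = pi (g i))
  (phi : {linear E -> {mpoly F[l]}})
  (hphi : forall i, phi (pi (g i)) = g' i)
  (R : realFieldType) (delta : R) (S : finType) (Hhat : S -> n.-tuple E) :
  @is_HSG R E n d delta S Hhat ->
  @is_PHSG R F n d l h delta S (fun s : S => [tuple of map phi (Hhat s)]).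
Proof.
move=> [hS hH].
set X : k.-tuple E := [tuple pi (g i) | i < k].
have hX : basis_of fullv X.
  by rewrite /X /=.
have Xi : forall i : 'I_k, X`_i = pi (g i).
  by move=> i; rewrite /X nth_mktuple.
have decomp : forall e : E, e = \sum_i coord X i e *: pi (g i).
  move=> e; rewrite {1}(coord_basis hX (memvf e)).
  by apply: eq_bigr => i _; rewrite Xi.
have piphi : forall e : E, pi (phi e) = e.
  move=> e; rewrite {1 2}(decomp e) linear_sum /= linear_sum /=.
  apply: eq_bigr => i _; rewrite linearZ /= linearZ /= hphi hg'coset //.
have degphi : forall e : E, deg_le h (phi e).
  move=> e; rewrite (decomp e) linear_sum /=.
  rewrite /deg_le; apply: (big_ind (fun p : {mpoly F[l]} => (msize p <= h.+1)%N)).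
  - by rewrite msize0.
  - move=> p q hp hq; apply: leq_trans (msizeD_le _ _) _.
    by rewrite geq_max hp hq.
  - move=> i _; rewrite linearZ /= hphi.
    exact: leq_trans (msizeZ_le _ _) (hg'deg i).
split => //.
  by move=> y i; rewrite tnth_map.
move=> f fn0 fdeg.
have inj : injective (in_alg E) by apply: fmorph_inj.
set fE := map_mpoly (in_alg E) f.
have key : forall t : n.-tuple {mpoly F[l]},
    pi (f \mPo t) = meval (fun i => pi (tnth t i)) fE.
  move=> t; rewrite /comp_mpoly /mmap rmorph_sum mevalE.
  rewrite (perm_big _ (msupp_map_mpoly _ inj)) /=.
  apply: eq_bigr => m _; rewrite rmorphM /= mcoeff_map_mpoly.
  rewrite -alg_mpolyC linearZ /= rmorph1 /mmap1 rmorph_prod /=.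
  by congr (_ * _); apply: eq_bigr => i _; rewrite rmorphXn.
have fEn0 : fE != 0.
  apply: contraNneq fn0 => h0; apply/eqP/mpolyP => m; have h1 := congr1 (mcoeff m) h0.
  move: h1; rewrite mcoeff_map_mpoly !mcoeff0 => h1.
  by apply: inj; rewrite h1 rmorph0.
have fEdeg : deg_le d fE.
  rewrite /deg_le /fE !msizeE (perm_big _ (msupp_map_mpoly _ inj)) /=.
  by rewrite -msizeE.
have := hH _ fEn0 fEdeg.
set A := [set t | _].
set B := [set y | _].
have sub : B \subset ~: A.
  apply/subsetP => y; rewrite !inE negbK => /eqP h0.
  have := key [tuple of map phi (Hhat y)]; rewrite h0 raddf0 => ->.
  by apply/eqP/meval_eq => i; rewrite tnth_map piphi.
have cB : (#|B| <= #|S| - #|A|)%N by have := subset_leq_card sub; rewrite [#|~: A|]cardsCs setCK.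
have cA : (#|A| <= #|S|)%N by rewrite -cardsT subset_leq_card // subsetT.
have S0 : (0 : R) < #|S|%:R by rewrite ltr0n.
move=> hd1; apply: le_trans (_ : ((#|S| - #|A|)%N%:R / #|S|%:R) <= _).
  by rewrite ler_pM2r ?invr_gt0 // ler_nat.
rewrite natrB // mulrBl divff ?gt_eqF //.
by rewrite lerBlDr addrC -lerBlDr.
Qed.
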